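(* Let $R$ be a commutative Noetherian ring, $n$ a non-negative integer and $L$ an $R$-module which is in dimension $<n$. Then the set $\{\mathfrak p\in\operatorname{Ass}_R L:\dim R/\mathfrak p\ge n\}$ is finite.
   Context: For an $R$-module $L$, $\dim\operatorname{Supp}L=\sup\{\dim R/\mathfrak p:\mathfrak p\in\operatorname{Supp}L\}$, the zero module having dimension $-\infty$. An $R$-module $L$ is ''in dimension $<n$'' if there is a finitely generated submodule $N\subseteq L$ with $\dim\operatorname{Supp}(L/N)<n$. *)

(* Defs.v *)
From HB Require Import structures.
From mathcomp Require Import all_boot all_order all_algebra.
From mathcomp Require Import boolp classical_sets cardinality.
Set Implicit Arguments. Unset Strict Implicit. Unset Printing Implicit Defensive.
Import GRing.Theory.
Local Open Scope ring_scope.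
Local Open Scope classical_set_scope.

Section CommAlg.
Variable R : comPzRingType.

Definition is_ideal (I : set R) : Prop :=
  I 0 /\ (forall x y, I x -> I y -> I (x + y)) /\ (forall a x, I x -> I (a * x)).

Definition prime_ideal (P : set R) : Prop :=
  is_ideal P /\ ~ P 1 /\ (forall a b, P (a * b) -> P a \/ P b).

Definition noetherian_ring : Prop :=
  forall I : nat -> set R, (forall k, is_ideal (I k)) ->
    (forall k, I k `<=` I k.+1) -> exists m, forall k, (m <= k)%N -> I k = I m.

(* dim R/p >= n : there is a chain q_0 < q_1 < ... < q_n of prime ideals
   of R containing p (= a chain of primes of length n in R/p). *)
Definition dim_quot_ge (p : set R) (n : nat) : Prop :=
  exists c : nat -> set R,
    (forall i, (i <= n)%N -> prime_ideal (c i) /\ p `<=` c i) /\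
    (forall i, (i < n)%N -> c i `<` c i.+1).

Variable L : lmodType R.

Definition ann (x : L) : set R := [set r | r *: x = 0].

Definition Ass (p : set R) : Prop := prime_ideal p /\ exists x : L, p = ann x.

Definition fg_submodule (N : set L) : Prop :=
  exists s : seq L, N = [set v | exists r : seq R,
     size r = size s /\ v = \sum_(i < size s) r`_i *: s`_i].

(* p in Supp (L/N): p prime and (L/N)_p <> 0, i.e. some x + N in L/N
   whose image x/1 in (L/N)_p is nonzero: no s outside p has s x in N. *)
Definition supp_quot (N : set L) (p : set R) : Prop :=
  prime_ideal p /\ exists x : L, forall s : R, ~ p s -> ~ N (s *: x).

(* L is in dimension < n: some f.g. N with dim Supp (L/N) < n, i.e.
   every p in Supp(L/N) has dim R/p < n (vacuous when L/N = 0). *)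
Definition in_dim_lt (n : nat) : Prop :=
  exists N : set L, fg_submodule N /\
    forall p, supp_quot N p -> ~ dim_quot_ge p n.

End CommAlg.

(* Main.v *)
Require Import Defs.
From HB Require Import structures.
From mathcomp Require Import all_boot all_order all_algebra.
From mathcomp Require Import boolp classical_sets cardinality.
Local Open Scope classical_set_scope.
Import GRing.Theory.
Local Open Scope ring_scope.

Definition colon {R : comPzRingType} (I : set R) (a : R) : set R := [set r | I (r * a)].
Definition AssQ {R : comPzRingType} (I : set R) : set (set R) :=
  [set p | prime_ideal p /\ exists a, p = colon I a].

Section Aux.
Implicit Types R : comPzRingType.

Lemma ideal0 R (I : set R) : is_ideal I -> I 0.
Proof. by case. Qed.
Lemma idealD R (I : set R) x y : is_ideal I -> I x -> I y -> I (x + y).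
Proof. by case=> _ [h _]; apply: h. Qed.
Lemma idealM R (I : set R) a x : is_ideal I -> I x -> I (a * x).
Proof. by case=> _ [_ h]; apply: h. Qed.
Lemma idealMr R (I : set R) a x : is_ideal I -> I x -> I (x * a).
Proof. by move=> hI hx; rewrite mulrC; apply: idealM. Qed.
Lemma idealN R (I : set R) x : is_ideal I -> I x -> I (- x).
Proof. by move=> hI hx; rewrite -mulN1r; apply: idealM. Qed.
Lemma idealB R (I : set R) x y : is_ideal I -> I x -> I y -> I (x - y).
Proof. by move=> hI hx hy; apply: idealD => //; apply: idealN. Qed.

Lemma noeth_ind R (hR : noetherian_ring R) (P : set R -> Prop) :
  (forall I, is_ideal I -> (forall J, is_ideal J -> I `<=` J -> ~ (J `<=` I) -> P J) -> P I) ->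
  forall I, is_ideal I -> P I.
Proof.
move=> HP I0 HI0; apply: contrapT => nP0.
pose S := {I : set R | is_ideal I /\ ~ P I}.
have step : forall I : S, exists J : S,
    proj1_sig I `<=` proj1_sig J /\ ~ (proj1_sig J `<=` proj1_sig I).
  move=> [I [HI nPI]] /=.
  apply: contrapT => hn; apply: nPI; apply: HP => // J HJ IJ nJI.
  apply: contrapT => nPJ; apply: hn; by exists (exist _ J (conj HJ nPJ)).
have [f hf] := choice step.
pose x0 : S := exist _ I0 (conj HI0 nP0).
pose c k := proj1_sig (iter k f x0).
have [m hm] := hR c (fun k => proj1 (proj2_sig (iter k f x0))) (fun k => (hf (iter k f x0)).1).
have := (hf (iter m f x0)).2.
move=> H; apply: H; have := hm m.+1 (leqnSn m); rewrite /c /= => ->; done.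
Qed.

Lemma colon_ideal R (I : set R) a : is_ideal I -> is_ideal (colon I a).
Proof.
move=> hI; split; first by rewrite /colon /= mul0r; apply: ideal0.
split=> [x y hx hy|b x hx]; rewrite /colon /=.
  by rewrite mulrDl; apply: idealD.
by rewrite -mulrA; apply: idealM.
Qed.

Lemma AssQ_finite R (hR : noetherian_ring R) (I : set R) :
  is_ideal I -> finite_set (AssQ I).
Proof.
move: I; apply: noeth_ind => // I hI IH.
have [[p [pp [a pa]]]|none] := pselect (exists p, AssQ I p); last first.
  suff -> : AssQ I = set0 by apply: finite_set0.
  by apply/seteqP; split=> q // hq; apply: none; exists q.
pose J := [set j | exists c i, I i /\ j = c * a + i].
have hJ : is_ideal J.
  split; first by exists 0, 0; split; [apply: ideal0|rewrite mul0r addr0].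
  split.
    move=> x y [c [i [hi ->]]] [d [k [hk ->]]]; exists (c + d), (i + k); split.
      by apply: idealD.
    by rewrite mulrDl -!addrA; congr (_ + _); rewrite addrCA.
  move=> b x [c [i [hi ->]]]; exists (b * c), (b * i); split; first by apply: idealM.
  by rewrite mulrDr mulrA.
have IJ : I `<=` J by move=> i hi; exists 0, i; rewrite mul0r add0r.
have nJI : ~ (J `<=` I).
  move=> h; case: pp => _ [p1 _]; apply: p1; rewrite pa /colon /= mul1r.
  by apply: h; exists 1, 0; split; [apply: ideal0|rewrite mul1r addr0].
have fJ := IH J hJ IJ nJI.
apply: (@sub_finite_set _ _ ([set p] `|` AssQ J)); last first.
  by rewrite finite_setU; split=> //; apply: finite_set1.
move=> q [qp [b qb]].
have [[t [Jt nIt]]|hB] := pselect (exists t, J (t * b) /\ ~ I (t * b)).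
  left; move: Jt => [c [i [hi Etb]]].
  have ntq : ~ q t by rewrite qb.
  have e1 : q = colon I (t * b).
    apply/seteqP; split=> r; rewrite /colon /= => hr.
      have : q (r * t) by apply: idealMr => //; case: qp.
      by rewrite qb /colon /= -mulrA.
    have : q (r * t) by rewrite qb /colon /= -mulrA.
    by case: qp => _ [_ hpr] /hpr [] //.
  have e2 : colon I (t * b) = colon I (c * a).
    apply/seteqP; split=> r; rewrite /colon /= Etb => hr.
      have -> : r * (c * a) = r * (c * a + i) - r * i by rewrite mulrDr addrK.
      by apply: idealB => //; apply: idealM.
    by rewrite mulrDr; apply: idealD => //; apply: idealM.
  have ncp : ~ p c.
    move=> hc; case: qp => _ [q1 _]; apply: q1; rewrite e1 e2 /colon /= mul1r.
    by move: hc; rewrite pa /colon.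
  rewrite /set1 /= e1 e2 pa; apply/seteqP; split=> r; rewrite /colon /= mulrA => hr.
    have : p (r * c) by rewrite pa /colon.
    by case: pp => _ [_ hpr] /hpr [] //; rewrite pa.
  have hpr : p r by rewrite pa.
  have := @idealMr _ _ c r (proj1 pp) hpr.
  by rewrite pa.
right; split=> //; exists b; rewrite qb; apply/seteqP; split=> r; rewrite /colon /=.
  by move/IJ.
move=> hr; apply: contrapT => nr; apply: hB; exists r; split=> //.
Qed.

Fixpoint spanR {R : comPzRingType} {L : lmodType R} (s : seq L) : set L :=
  match s with
  | [::] => [set v | v = 0]
  | x :: s' => [set v | exists c y, spanR s' y /\ v = c *: x + y]
  end.

Lemma spanR0 R (L : lmodType R) (s : seq L) : spanR s 0.
Proof.
elim: s => [|x s IH] //=; exists 0, 0; split=> //; by rewrite scale0r addr0.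
Qed.

Lemma spanRD R (L : lmodType R) (s : seq L) u v : spanR s u -> spanR s v -> spanR s (u + v).
Proof.
elim: s u v => [|x s IH] u v /=; first by move=> -> ->; rewrite addr0.
move=> [c [y [hy ->]]] [d [z [hz ->]]]; exists (c + d), (y + z); split; first by apply: IH.
by rewrite scalerDl -!addrA; congr (_ + _); rewrite addrCA.
Qed.

Lemma spanRZ R (L : lmodType R) (s : seq L) a u : spanR s u -> spanR s (a *: u).
Proof.
elim: s u => [|x s IH] u /=; first by move=> ->; rewrite scaler0.
move=> [c [y [hy ->]]]; exists (a * c), (a *: y); split; first by apply: IH.
by rewrite scalerDr scalerA.
Qed.

Lemma spanRE R (L : lmodType R) (s : seq L) v :
  (exists r : seq R, size r = size s /\ v = \sum_(i < size s) r`_i *: s`_i) <-> spanR s v.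
Proof.
elim: s v => [|x s IH] v /=.
  split; first by move=> [r [_ ->]]; rewrite big_ord0.
  by move=> ->; exists [::]; rewrite big_ord0.
split.
  move=> [[|c r] [//= /eqP]]; rewrite eqSS => /eqP hr.
  rewrite big_ord_recl => ->; exists c, (\sum_(i < size s) (c :: r)`_(lift ord0 i) *: (x :: s)`_(lift ord0 i)).
  split=> //; apply/IH; exists r; split=> //.
move=> [c [y [/IH [r [hr ->]] ->]]]; exists (c :: r); split; first by rewrite /= hr.
rewrite big_ord_recl; congr (_ + _); by apply: eq_bigr => i _; rewrite lift0.
Qed.

Definition AssIn {R : comPzRingType} {L : lmodType R} (N : set L) : set (set R) :=
  [set p | prime_ideal p /\ exists y, N y /\ p = ann y].

Lemma AssIn_finite R (hR : noetherian_ring R) (L : lmodType R) (s : seq L) :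
  finite_set (AssIn (spanR s)).
Proof.
elim: s => [|x s IH] /=.
  suff -> : AssIn (fun v : L => v = 0) = set0 by apply: finite_set0.
  apply/seteqP; split=> q // [[_ [q1 _]] [y [hy qy]]]; apply: q1.
  by rewrite qy hy; apply: scaler0.
pose I := [set r : R | spanR s (r *: x)].
have hI : is_ideal I.
  split; first by rewrite /I /= scale0r; apply: spanR0.
  split=> [a b ha hb|a b hb]; rewrite /I /=.
    by rewrite scalerDl; apply: spanRD.
  by rewrite -scalerA; apply: spanRZ.
apply: (@sub_finite_set _ _ (AssIn (spanR s) `|` AssQ I)); last first.
  by rewrite finite_setU; split=> //; apply: AssQ_finite.
move=> q [qp [y [[c [y' [hy' Ey]]] qy]]].
have [[t [Nt ntq]]|hB] := pselect (exists t, spanR s (t *: y) /\ ~ q t).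
  left; split=> //; exists (t *: y); split=> //.
  apply/seteqP; split=> r; rewrite /ann /= scalerA => hr.
    have : q (r * t) by apply: idealMr => //; case: qp.
    by rewrite qy.
  have : q (r * t) by rewrite qy.
  by case: qp => _ [_ hpr] /hpr [].
right; split=> //; exists c; apply/seteqP; split=> r; rewrite /colon /I /=.
  rewrite qy /ann /= => hr.
  have -> : (r * c) *: x = r *: y - r *: y' by rewrite Ey scalerDr scalerA addrK.
  apply: spanRD; first by rewrite hr; apply: spanR0.
  by rewrite -scaleN1r; do 2 apply: spanRZ.
move=> hr; apply: contrapT => nr; apply: hB; exists r; split=> //.
rewrite Ey scalerDr scalerA; apply: spanRD => //; by apply: spanRZ.
Qed.

End Aux.

Theorem lemma2p6 (R : comPzRingType) (hR : noetherian_ring R)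
  (L : lmodType R) (n : nat) (hL : in_dim_lt L n) :
  finite_set [set p : set R | Ass L p /\ dim_quot_ge p n].
Proof.
case: hL => N [[s Ns] hN].
apply: (@sub_finite_set _ _ (AssIn (spanR s))); last by apply: AssIn_finite.
move=> p [[pp [x px]] hd].
have : ~ supp_quot N p by move=> h; exact: (hN p h hd).
move=> nS.
have [t [ntp Nt]] : exists t, ~ p t /\ N (t *: x).
  apply: contrapT => hn; apply: nS; split=> //; exists x => t ntp Nt.
  by apply: hn; exists t.
split=> //; exists (t *: x); split.
  by move: Nt; rewrite Ns => /spanRE.
apply/seteqP; split=> r; rewrite /ann /= scalerA => hr.
  have : p (r * t) by apply: idealMr => //; case: pp.
  by rewrite px.
have : p (r * t) by rewrite px.
by case: pp => _ [_ hpr] /hpr [].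
Qed.
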